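(* Let $k$ be an algebraically closed field of characteristic $0$, $R=k[x,y]$, and let $L=(x^d,x^{d-1}y^{a_1},\dots,xy^{a_{d-1}},y^{a_d})$ with $0=a_0<a_1<\dots<a_d$ be a lex-segment ideal, with $b_i=a_i-a_{i-1}$. If $b_2\ge b_3\ge\dots\ge b_d$, then $L^2=(x^d,x^{d-1}y^{a_1},y^{a_d})L$. In particular $\operatorname{depth}\operatorname{gr}_L(R)>0$.
   Context: $\operatorname{gr}_L(R)=\bigoplus_{n\ge0}L^n/L^{n+1}$. *)

(* Defs.v *)
From HB Require Import structures.
From mathcomp Require Import all_boot all_order all_algebra all_field.
From mathcomp Require Import mpoly.
Set Implicit Arguments. Unset Strict Implicit. Unset Printing Implicit Defensive.
Import GRing.Theory.
Local Open Scope ring_scope.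

Section Ideals.
Variable R : comNzRingType.

Definition gen_ideal (n : nat) (g : 'I_n -> R) : R -> Prop :=
  fun p => exists c : 'I_n -> R, p = \sum_(i < n) c i * g i.

Definition ideal_mul (I J : R -> Prop) : R -> Prop :=
  fun p => exists s : seq (R * R),
    (forall q, q \in s -> I q.1 /\ J q.2) /\ p = \sum_(q <- s) q.1 * q.2.

Fixpoint ideal_pow (I : R -> Prop) (n : nat) : R -> Prop :=
  match n with
  | 0 => fun _ => True
  | n'.+1 => ideal_mul (ideal_pow I n') I
  end.

Definition ideal_eq (I J : R -> Prop) : Prop := forall p, I p <-> J p.

(* Associated graded ring gr_I(R) = (+)_n I^n/I^(n+1).  An element is represented
   by a family f with f n in I^n (its degree-n component, taken mod I^(n+1)),
   with f n = 0 for n large. *)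
Definition gr_elt (I : R -> Prop) (f : nat -> R) : Prop :=
  (forall n, ideal_pow I n (f n)) /\ exists N, forall n, (N <= n)%N -> f n = 0.

Definition gr_zero (I : R -> Prop) (f : nat -> R) : Prop :=
  forall n, ideal_pow I n.+1 (f n).

Definition gr_mul (f g : nat -> R) : nat -> R :=
  fun n => \sum_(i < n.+1) f i * g (n - i)%N.

(* depth gr_I(R) > 0, where the depth is taken w.r.t. the homogeneous maximal
   ideal M = m/I (+) gr_I(R)_+ (m a maximal ideal of R containing I): M contains
   a nonzerodivisor of gr_I(R). *)
Definition gr_depth_pos (m I : R -> Prop) : Prop :=
  exists u, [/\ gr_elt I u, m (u 0%N) &
    forall z, gr_elt I z -> gr_zero I (gr_mul u z) -> gr_zero I z].

End Ideals.

Section LexSegment.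
Variable k : fieldType.

Definition xv : {mpoly k[2]} := 'X_(ord0 : 'I_2).
Definition yv : {mpoly k[2]} := 'X_(ord_max : 'I_2).

Definition max_xy : {mpoly k[2]} -> Prop :=
  gen_ideal (fun i : 'I_2 => if val i == 0%N then xv else yv).

Definition lexL (d : nat) (a : nat -> nat) : {mpoly k[2]} -> Prop :=
  gen_ideal (fun i : 'I_d.+1 => xv ^+ (d - i) * yv ^+ (a i)).

Definition J3 (d : nat) (a : nat -> nat) : {mpoly k[2]} -> Prop :=
  gen_ideal (fun i : 'I_3 =>
    nth 0 [:: xv ^+ d; xv ^+ (d.-1) * yv ^+ (a 1%N); yv ^+ (a d)] i).

End LexSegment.

(* Main.v *)
Require Import Defs.
From HB Require Import structures.
From mathcomp Require Import all_boot all_order all_algebra all_field.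
From mathcomp Require Import mpoly.
From mathcomp Require Import zify.
From Stdlib Require Import Classical.
Set Implicit Arguments. Unset Strict Implicit. Unset Printing Implicit Defensive.
Import GRing.Theory.
Local Open Scope ring_scope.

Section GenIdeal.
Variable R : comNzRingType.

Definition is_ideal (I : R -> Prop) :=
  [/\ I 0, (forall x y, I x -> I y -> I (x + y)) & (forall r x, I x -> I (r * x))].

Lemma ideal_sum (I : R -> Prop) (T : Type) (r : seq T) (F : T -> R) :
  is_ideal I -> (forall t, I (F t)) -> I (\sum_(t <- r) F t).
Proof.
case=> I0 ID _ HF; elim: r => [|t r IH]; first by rewrite big_nil.
by rewrite big_cons; apply: ID.
Qed.

Lemma gen_ideal_is_ideal n (g : 'I_n -> R) : is_ideal (gen_ideal g).
Proof.
split.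
- by exists (fun _ => 0); rewrite big1 // => i _; rewrite mul0r.
- move=> x y [c ->] [c' ->]; exists (fun i => c i + c' i).
  by rewrite -big_split; apply: eq_bigr => i _; rewrite mulrDl.
- move=> r x [c ->]; exists (fun i => r * c i).
  rewrite big_distrr; apply: eq_bigr => i _ /=; by rewrite mulrA.
Qed.

Lemma gen_ideal_gen n (g : 'I_n -> R) i : gen_ideal g (g i).
Proof.
exists (fun j => (j == i)%:R); rewrite (bigD1 i) //= eqxx mul1r big1 ?addr0 //.
by move=> j /negbTE ->; rewrite mul0r.
Qed.

Lemma gen_ideal_sub n (g : 'I_n -> R) (I : R -> Prop) :
  is_ideal I -> (forall i, I (g i)) -> forall x, gen_ideal g x -> I x.
Proof.
move=> HI Hg x [c ->]; apply: ideal_sum => // i.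
by case: HI => _ _; apply.
Qed.

Lemma ideal_mul_is_ideal (I J : R -> Prop) : is_ideal I -> is_ideal (ideal_mul I J).
Proof.
case=> _ _ IM; split.
- by exists [::]; rewrite big_nil.
- move=> x y [s [Hs ->]] [s' [Hs' ->]]; exists (s ++ s'); split.
    by move=> q; rewrite mem_cat => /orP [] ?; [apply: Hs | apply: Hs'].
  by rewrite big_cat.
- move=> r x [s [Hs ->]]; exists [seq (r * q.1, q.2) | q <- s]; split.
    move=> q /mapP [q' /Hs [H1 H2] ->] /=; split => //; exact: IM.
  by rewrite big_map big_distrr; apply: eq_bigr => q _ /=; rewrite mulrA.
Qed.

Lemma ideal_mul_mem (I J : R -> Prop) a b : I a -> J b -> ideal_mul I J (a * b).
Proof.
by move=> Ha Hb; exists [:: (a, b)]; split;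
  [move=> q; rewrite mem_seq1 => /eqP -> | rewrite big_cons big_nil addr0].
Qed.

Lemma ideal_mul_sub (I J K : R -> Prop) : is_ideal K ->
  (forall a b, I a -> J b -> K (a * b)) -> forall x, ideal_mul I J x -> K x.
Proof.
move=> HK H x [s [Hs ->]]; case: (HK) => K0 KD _.
elim: s Hs => [|q s IH] Hs; first by rewrite big_nil.
rewrite big_cons; apply: KD; last by apply: IH => q' q's; apply: Hs; rewrite inE q's orbT.
by case: (Hs q (mem_head _ _)) => ??; apply: H.
Qed.

Lemma ideal_pow_is_ideal (I : R -> Prop) n : is_ideal I -> is_ideal (ideal_pow I n).
Proof.
move=> HI; elim: n => [|n IH] /=; first by split.
exact: ideal_mul_is_ideal.
Qed.

End GenIdeal.

Section Comb.
Local Open Scope nat_scope.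
Variables (d : nat) (a : nat -> nat).
Hypothesis d1 : (1 <= d)%N.
Hypothesis a0 : a 0%N = 0%N.
Hypothesis ainc : forall i, (i < d)%N -> (a i < a i.+1)%N.
Hypothesis bdec : forall i, (2 <= i)%N -> (i < d)%N -> (a i.+1 - a i <= a i - a i.-1)%N.

Lemma amono_aux i k : (i + k <= d)%N -> (a i + k <= a (i + k))%N.
Proof.
elim: k => [|k IH] H; first by rewrite !addn0.
have := IH ltac:(lia); have := ainc (i := i + k) ltac:(lia).
rewrite !addnS; lia.
Qed.

Lemma amono i j : (i <= j)%N -> (j <= d)%N -> (a i <= a j)%N.
Proof.
move=> ij jd; have := @amono_aux i (j - i) ltac:(lia).
have -> : (i + (j - i) = j)%N by lia. lia.
Qed.

Lemma bmono u k : (2 <= u)%N -> (u + k <= d)%N ->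
  (a (u + k) - a (u + k).-1 <= a u - a u.-1)%N.
Proof.
move=> u2; elim: k => [|k IH] H; first by rewrite addn0.
have := IH ltac:(lia); have := bdec (i := u + k) ltac:(lia) ltac:(lia).
rewrite !addnS /=; lia.
Qed.

Lemma Dlem k s t : (1 <= s)%N -> (s <= t)%N -> (t + k <= d)%N ->
  (a (t + k) + a s <= a (s + k) + a t)%N.
Proof.
move=> s1 st; elim: k => [|k IH] H; first by rewrite !addn0 addnC.
have := IH ltac:(lia).
have := @bmono (s + k).+1 (t - s) ltac:(lia) ltac:(lia).
have -> : ((s + k).+1 + (t - s) = (t + k).+1)%N by lia.
have := ainc (i := t + k) ltac:(lia).
have := ainc (i := s + k) ltac:(lia).
rewrite !addnS /=; lia.
Qed.

Fixpoint Q (n p q : nat) : Prop :=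
  match n with
  | 0 => exists2 i, (i <= d)%N & p = (d - i)%N /\ q = a i
  | n'.+1 => exists p' q', Q n' p' q' /\
      [\/ p = (d + p')%N /\ q = q',
          p = (d - 1 + p')%N /\ q = (a 1 + q')%N |
          p = p' /\ q = (a d + q')%N]
  end.

Lemma K1 i j : (i <= d)%N -> (j <= d)%N ->
  exists p q, [/\ Q 1 p q, (p <= d - i + (d - j))%N & (q <= a i + a j)%N].
Proof.
wlog ij : i j / (i <= j)%N.
  move=> W id jd; case: (leqP i j) => h; first exact: W.
  have [p [q [H1 H2 H3]]] := W j i ltac:(lia) jd id.
  by exists p, q; split => //; lia.
move=> id jd.
have ad1 : (a 1 <= a d)%N by apply: amono.
case: (posnP i) => [i0|ipos].
  exists (d + (d - j))%N, (a j); split; last by rewrite i0 a0.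
    by exists (d - j)%N, (a j); split; [exists j | constructor 1].
  by rewrite i0; lia.
case: (eqVneq i 1%N) => [i1|in1].
  exists (d - 1 + (d - j))%N, (a 1 + a j)%N; split; try (rewrite i1; lia).
  by exists (d - j)%N, (a j); split; [exists j | constructor 2].
case: (eqVneq j d) => [jd'|jnd].
  exists (d - i)%N, (a d + a i)%N; split; try (rewrite jd'; lia).
  by exists (d - i)%N, (a i); split; [exists i | constructor 3].
case: (leqP (i + j - 1) d) => h.
  exists (d - 1 + (d - (i + j - 1)))%N, (a 1 + a (i + j - 1))%N; split; try lia.
    by exists (d - (i + j - 1))%N, (a (i + j - 1)); split; [exists (i + j - 1)%N; [lia | split; lia] | constructor 2].
  have := @Dlem (i - 1) 1 j ltac:(lia) ltac:(lia) ltac:(lia).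
  have -> : (j + (i - 1) = i + j - 1)%N by lia.
  have -> : (1 + (i - 1) = i)%N by lia.
  lia.
exists (d - (i + j - d))%N, (a d + a (i + j - d))%N; split; try lia.
  by exists (d - (i + j - d))%N, (a (i + j - d)); split; [exists (i + j - d)%N; [lia | split; lia] | constructor 3].
have := @Dlem (d - j) (i + j - d) j ltac:(lia) ltac:(lia) ltac:(lia).
have -> : (j + (d - j) = d)%N by lia.
have -> : (i + j - d + (d - j) = i)%N by lia.
lia.
Qed.

Lemma K1' n p1 q1 i : Q n p1 q1 -> (i <= d)%N ->
  exists p q, [/\ Q n.+1 p q, (p <= p1 + (d - i))%N & (q <= q1 + a i)%N].
Proof.
elim: n p1 q1 => [|n IH] p1 q1 /=.
  move=> [j jd [-> ->]] id; have [p [q [H1 H2 H3]]] := K1 jd id.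
  by exists p, q.
move=> [p' [q' [HQ Hc]]] id.
have [p [q [H1 H2 H3]]] := IH p' q' HQ id.
case: Hc => [[-> ->]|[-> ->]|[-> ->]].
- exists (d + p)%N, q; split; try lia.
  by exists p, q; split => //; constructor 1.
- exists (d - 1 + p)%N, (a 1 + q)%N; split; try lia.
  by exists p, q; split => //; constructor 2.
- exists p, (a d + q)%N; split; try lia.
  by exists p, q; split => //; constructor 3.
Qed.

Lemma Qsplit0 n p q : Q n p q ->
  (exists n' p', [/\ n = n'.+1, Q n' p' q & p = (d + p')%N]) \/ (a 1 * n <= q)%N.
Proof.
have ad1 : (a 1 <= a d)%N by apply: amono.
elim: n p q => [|n IH] p q /=; first by right; lia.
move=> [p' [q' [HQ Hc]]].
case: Hc => [[-> ->]|[-> ->]|[-> ->]].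
- by left; exists n, p'.
- case: (IH _ _ HQ) => [[n' [p'' [En HQ' ->]]]|H].
    left; exists n, (d - 1 + p'')%N; split => //; last by lia.
    by rewrite En; exists p'', q'; split => //; constructor 2.
  by right; rewrite mulnS; lia.
- case: (IH _ _ HQ) => [[n' [p'' [En HQ' ->]]]|H].
    left; exists n, p''; split => //.
    by rewrite En; exists p'', q'; split => //; constructor 3.
  by right; rewrite mulnS; lia.
Qed.

Lemma Qsplit2 n p q : Q n p q ->
  (exists n' q', [/\ n = n'.+1, Q n' p q' & q = (a d + q')%N]) \/ ((d - 1) * n <= p)%N.
Proof.
elim: n p q => [|n IH] p q /=; first by right; lia.
move=> [p' [q' [HQ Hc]]].
case: Hc => [[-> ->]|[-> ->]|[-> ->]].
- case: (IH _ _ HQ) => [[n' [q'' [En HQ' ->]]]|H].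
    left; exists n, q''; split => //.
    by rewrite En; exists p', q''; split => //; constructor 1.
  by right; rewrite mulnS; lia.
- case: (IH _ _ HQ) => [[n' [q'' [En HQ' ->]]]|H].
    left; exists n, (a 1 + q'')%N; split => //; last by lia.
    by rewrite En; exists p', q''; split => //; constructor 2.
  by right; rewrite mulnS; lia.
- by left; exists n, q'.
Qed.

Lemma Qdiag n : Q n ((d - 1) * n.+1) (a 1 * n.+1).
Proof.
elim: n => [|n IH] /=.
  by exists 1%N; [lia | split; lia].
exists ((d - 1) * n.+1)%N, (a 1 * n.+1)%N; split => //.
by constructor 2; split; rewrite [in LHS]mulnS; lia.
Qed.

End Comb.

Section Mono.
Variable k : fieldType.
Local Notation MP := {mpoly k[2]}.

Definition mk (p q : nat) : 'X_{1..2} :=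
  [multinom (if val i == 0%N then p else q) | i < 2].

Lemma mkE0 p q : mk p q ord0 = p.
Proof. by rewrite mnmE. Qed.
Lemma mkE1 p q : mk p q ord_max = q.
Proof. by rewrite mnmE. Qed.

Lemma ord2P (i : 'I_2) : i = ord0 \/ i = ord_max.
Proof. by case: i => [[|[|//]] Hi]; [left|right]; apply: val_inj. Qed.

Lemma mk_eta (m : 'X_{1..2}) : m = mk (m ord0) (m ord_max).
Proof. by apply/mnmP => i; rewrite mnmE; case: (ord2P i) => ->. Qed.

Lemma mkD p q p' q' : (mk p q + mk p' q')%MM = mk (p + p') (q + q').
Proof. by apply/mnmP => i; rewrite mnmDE !mnmE; case: ifP. Qed.

Lemma mnm_leE (m m' : 'X_{1..2}) :
  (m <= m')%MM = (m ord0 <= m' ord0)%N && (m ord_max <= m' ord_max)%N.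
Proof.
apply/mnm_lepP/andP => [H|[H1 H2] i]; first by split; apply: H.
by case: (ord2P i) => ->.
Qed.

Lemma Xmk p q : (xv k) ^+ p * (yv k) ^+ q = 'X_[mk p q].
Proof.
rewrite /xv /yv !mpolyXn -mpolyXD; congr 'X_[_]; apply/mnmP => i.
rewrite mnmDE !mulmnE !mnm1E mnmE; case: (ord2P i) => -> //=.
all: by rewrite ?mul0n ?addn0 ?mul1n ?muln1 ?add0n.
Qed.

Definition MI (P : 'X_{1..2} -> Prop) (f : MP) := forall m, m \in msupp f -> P m.

Lemma MI0 P : MI P 0.
Proof. by move=> m; rewrite mcoeff_msupp mcoeff0 eqxx. Qed.

Lemma MID P f g : MI P f -> MI P g -> MI P (f + g).
Proof. by move=> Hf Hg m /msuppD_le; rewrite mem_cat => /orP [] ?; auto. Qed.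

Lemma MIZ P c f : MI P f -> MI P (c *: f).
Proof. by move=> Hf m /msuppZ_le; auto. Qed.

Lemma MI_sum P (T : eqType) (r : seq T) (F : T -> MP) :
  (forall t, t \in r -> MI P (F t)) -> MI P (\sum_(t <- r) F t).
Proof.
elim: r => [|t r IH] H; first by rewrite big_nil; apply: MI0.
rewrite big_cons; apply: MID; first by apply: H; rewrite mem_head.
by apply: IH => t' Ht'; apply: H; rewrite inE Ht' orbT.
Qed.

Lemma MI_mulX (P S : 'X_{1..2} -> Prop) f m :
  MI P f -> (forall m', P m' -> S (m + m')%MM) -> MI S (f * 'X_[m]).
Proof.
move=> Hf HS m0; rewrite (perm_mem (msuppMX f m)) => /mapP [m' Hm' ->].
by apply: HS; apply: Hf.
Qed.

Lemma MI_mul (P P' S : 'X_{1..2} -> Prop) f g :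
  MI P f -> MI P' g -> (forall m1 m2, P m1 -> P' m2 -> S (m1 + m2)%MM) ->
  MI S (f * g).
Proof.
move=> Hf Hg HS; rewrite [g]mpolyE mulr_sumr big_seq.
rewrite -big_seq; apply: MI_sum => m Hm.
rewrite -scalerAr; apply: MIZ; apply: (MI_mulX Hf) => m' Hm'.
by rewrite addmC; apply: HS => //; apply: Hg.
Qed.

Lemma MI_X (P : 'X_{1..2} -> Prop) m : P m -> MI P 'X_[m].
Proof. by move=> Hm m'; rewrite msuppX mem_seq1 => /eqP ->. Qed.

Lemma MI_ideal P : (forall m m', P m -> P (m' + m)%MM) -> is_ideal (MI P).
Proof.
move=> HP; split; [exact: MI0 | exact: MID |].
move=> r x Hx; apply: (MI_mul (P := fun _ => True) (P' := P)) => //.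
by move=> m1 m2 _; apply: HP.
Qed.

Lemma MI_coef P f m : MI P f -> ~ P m -> f@_m = 0.
Proof.
move=> Hf Hm; apply/eqP; rewrite mcoeff_eq0; apply/negP => /Hf; exact: Hm.
Qed.

Lemma ideal_sum_in (I : MP -> Prop) (T : eqType) (r : seq T) (F : T -> MP) :
  is_ideal I -> (forall t, t \in r -> I (F t)) -> I (\sum_(t <- r) F t).
Proof.
case=> I0 ID _; elim: r => [|t r IH] HF; first by rewrite big_nil.
rewrite big_cons; apply: ID; first by apply: HF; rewrite mem_head.
by apply: IH => t' Ht'; apply: HF; rewrite inE Ht' orbT.
Qed.

Lemma MI_to_ideal (I : MP -> Prop) (P : 'X_{1..2} -> Prop) f :
  is_ideal I -> (forall m, P m -> I 'X_[m]) -> MI P f -> I f.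
Proof.
move=> HI HX Hf; rewrite [f]mpolyE; apply: ideal_sum_in => // m Hm.
rewrite -mul_mpolyC; case: HI => _ _; apply; apply: HX; exact: Hf.
Qed.

End Mono.

Lemma argmax (T : eqType) (s : seq T) (B : T -> Prop) (f : T -> nat) :
  (exists x, x \in s /\ B x) ->
  exists x, [/\ x \in s, B x & forall y, y \in s -> B y -> (f y <= f x)%N].
Proof.
elim: s => [|t s IH]; first by case=> x [].
move=> Hex; case: (classic (exists x, x \in s /\ B x)) => [/IH [x [xs Bx Hx]]|Hn].
  case: (classic (B t /\ (f x < f t)%N)) => [[Bt lt]|Hn].
    exists t; split => //; first by rewrite mem_head.
    move=> y; rewrite inE => /orP [/eqP -> //|ys By].
    by have := Hx y ys By; lia.
  exists x; split => //; first by rewrite inE xs orbT.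
  move=> y; rewrite inE => /orP [/eqP ->|ys By]; last exact: Hx.
  by move=> Bt; case: (leqP (f t) (f x)) => // lt; exfalso; apply: Hn.
have Bt : B t.
  case: Hex => x []; rewrite inE => /orP [/eqP -> //|xs Bx].
  by exfalso; apply: Hn; exists x.
exists t; split => //; first by rewrite mem_head.
move=> y; rewrite inE => /orP [/eqP -> //|ys By].
by exfalso; apply: Hn; exists y.
Qed.

Section Main.
Variable k : fieldType.
Variables (d : nat) (a : nat -> nat).
Hypothesis d1 : (1 <= d)%N.
Hypothesis a0 : a 0%N = 0%N.
Hypothesis ainc : forall i, (i < d)%N -> (a i < a i.+1)%N.
Hypothesis bdec : forall i, (2 <= i)%N -> (i < d)%N -> (a i.+1 - a i <= a i - a i.-1)%N.
Local Notation MP := {mpoly k[2]}.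
Local Notation L := (@lexL k d a).
Local Notation Q := (Q d a).

Definition Pn n (m : 'X_{1..2}) :=
  exists p q, [/\ Q n p q, (p <= m ord0)%N & (q <= m ord_max)%N].

Lemma Pn_up n m m' : Pn n m -> Pn n (m' + m)%MM.
Proof. by case=> p [q [H1 H2 H3]]; exists p, q; split => //; rewrite mnmDE; lia. Qed.

Lemma L_ideal : is_ideal L.
Proof. exact: gen_ideal_is_ideal. Qed.

Lemma Lgen i : (i <= d)%N -> L 'X_[mk (d - i) (a i)].
Proof.
move=> id; rewrite -Xmk.
exact: (gen_ideal_gen (fun i : 'I_d.+1 => xv k ^+ (d - i) * yv k ^+ (a i)) (Ordinal (n:=d.+1) (m:=i) id)).
Qed.

Lemma L_pow1 f : L f -> ideal_pow L 1 f.
Proof. by move=> Hf; rewrite -[f]mul1r; apply: ideal_mul_mem. Qed.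

Lemma pow_X n p q : Q n p q -> ideal_pow L n.+1 'X_[mk p q].
Proof.
elim: n p q => [|n IH] p q /=.
  by case=> i id [-> ->]; apply: L_pow1; apply: Lgen.
case=> p' [q' [HQ Hc]]; have IH' := IH _ _ HQ.
case: Hc => [[-> ->]|[-> ->]|[-> ->]].
- rewrite addnC.
  idtac.
  rewrite -[q']addn0.
  rewrite -mkD mpolyXD; apply: ideal_mul_mem => //.
  by have := Lgen (leq0n d); rewrite subn0 a0; exact: id.
- rewrite addnC [(a 1 + _)%N]addnC -mkD mpolyXD; apply: ideal_mul_mem => //.
  by have := Lgen d1; rewrite subn1; exact: id.
- rewrite [(a d + q')%N]addnC -[p']addn0 -mkD mpolyXD; apply: ideal_mul_mem => //.
  by have := Lgen (leqnn d); rewrite subnn; exact: id.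
Qed.

Lemma Xm_sub (I : MP -> Prop) (m : 'X_{1..2}) p q : is_ideal I -> I 'X_[mk p q] ->
  (p <= m ord0)%N -> (q <= m ord_max)%N -> I 'X_[m].
Proof.
move=> [_ _ IM] HX hp hq.
have -> : m = ((m - mk p q) + mk p q)%MM.
  by rewrite submK // mnm_leE mkE0 mkE1 hp hq.
by rewrite mpolyXD; apply: IM.
Qed.

Lemma MI_pow n f : MI (Pn n) f -> ideal_pow L n.+1 f.
Proof.
apply: MI_to_ideal; first exact: ideal_pow_is_ideal L_ideal.
move=> m [p [q [HQ hp hq]]]; apply: (Xm_sub _ _ hp hq).
  exact: ideal_pow_is_ideal L_ideal.
exact: pow_X.
Qed.

Lemma L_MI f : L f -> MI (Pn 0) f.
Proof.
apply: gen_ideal_sub; first by apply: MI_ideal => m m'; apply: Pn_up.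
move=> i /=; rewrite Xmk; apply: MI_X.
exists (d - i)%N, (a i); split; rewrite ?mkE0 ?mkE1 //.
by exists (val i); [rewrite -ltnS ltn_ord | ].
Qed.

Lemma pow_MI n f : ideal_pow L n.+1 f -> MI (Pn n) f.
Proof.
have HI : forall n, is_ideal (@MI k (Pn n)).
  by move=> n'; apply: MI_ideal => m m'; apply: Pn_up.
elim: n f => [|n IH] f /=.
  apply: ideal_mul_sub => // x y _ Hy.
  apply: (MI_mul (P := fun _ => True) (P' := Pn 0)).
  - by [].
  - exact: L_MI.
  - by move=> m1 m2 _ H; apply: Pn_up.
apply: ideal_mul_sub => // x y Hx Hy.
apply: (MI_mul (IH _ Hx) (L_MI Hy)).
move=> m1 m2 [p1 [q1 [HQ1 h1 h1']]] [p2 [q2 [[i id [E1 E2]] h2 h2']]].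
have [p [q [HQ hp hq]]] := K1' d1 a0 ainc bdec HQ1 id.
exists p, q; split => //; rewrite mnmDE; lia.
Qed.

Local Notation J := (@J3 k d a).

Lemma J3g0 : J 'X_[mk d 0].
Proof.
have := gen_ideal_gen (fun i : 'I_3 =>
  nth 0 [:: xv k ^+ d; xv k ^+ (d.-1) * yv k ^+ (a 1%N); yv k ^+ (a d)] i) (Ordinal (n:=3) (m:=0) isT).
by rewrite /= -Xmk expr0 mulr1.
Qed.

Lemma J3g1 : J 'X_[mk (d - 1) (a 1)].
Proof.
have := gen_ideal_gen (fun i : 'I_3 =>
  nth 0 [:: xv k ^+ d; xv k ^+ (d.-1) * yv k ^+ (a 1%N); yv k ^+ (a d)] i) (Ordinal (n:=3) (m:=1) isT).
by rewrite /= -Xmk subn1.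
Qed.

Lemma J3g2 : J 'X_[mk 0 (a d)].
Proof.
have := gen_ideal_gen (fun i : 'I_3 =>
  nth 0 [:: xv k ^+ d; xv k ^+ (d.-1) * yv k ^+ (a 1%N); yv k ^+ (a d)] i) (Ordinal (n:=3) (m:=2) isT).
by rewrite /= -Xmk expr0 mul1r.
Qed.

Lemma J3_sub f : J f -> L f.
Proof.
apply: gen_ideal_sub; first exact: L_ideal.
case=> [[|[|[|//]]] Hi] /=.
- by have := Lgen (leq0n d); rewrite subn0 a0 -Xmk expr0 mulr1.
- by have := Lgen d1; rewrite subn1 -Xmk.
- by have := Lgen (leqnn d); rewrite subnn -Xmk expr0 mul1r.
Qed.

Lemma part1 : ideal_eq (ideal_pow L 2) (ideal_mul J L).
Proof.
move=> f; split.
  move/(pow_MI (n := 1)); apply: MI_to_ideal.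
    exact: ideal_mul_is_ideal (gen_ideal_is_ideal _).
  move=> m [p [q [HQ hp hq]]]; apply: (Xm_sub _ _ hp hq).
    exact: ideal_mul_is_ideal (gen_ideal_is_ideal _).
  case: HQ => p' [q' [[i id [Ep Eq]] Hc]].
  have HL : L 'X_[mk p' q'] by rewrite Ep Eq; apply: Lgen.
  case: Hc => [[-> ->]|[-> ->]|[-> ->]].
  - by rewrite -[q']add0n -mkD mpolyXD; apply: ideal_mul_mem => //; apply: J3g0.
  - by rewrite -mkD mpolyXD; apply: ideal_mul_mem => //; apply: J3g1.
  - by rewrite -[p']add0n -mkD mpolyXD; apply: ideal_mul_mem => //; apply: J3g2.
apply: ideal_mul_sub; first exact: ideal_pow_is_ideal L_ideal.
move=> x y Hx Hy /=; apply: ideal_mul_mem => //.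
by apply: L_pow1; apply: J3_sub.
Qed.

Lemma key n (z : MP) :
  ideal_pow L n.+2 (('X_[mk d 0] + 'X_[mk 0 (a d)]) * z) -> ideal_pow L n.+1 z.
Proof.
move=> /pow_MI HU; apply: MI_pow.
apply: NNPP => Hn.
have Hex : exists m, m \in msupp z /\ ~ Pn n m.
  by apply: NNPP => H; apply: Hn => m Hm; apply: NNPP => HP; apply: H; exists m; split.
have adpos : (0 < a d)%N.
  by have := ainc d1; have := amono d1 a0 ainc d1 (leqnn d); rewrite a0; lia.
have [m1 [m1s m1B m1max]] := argmax (fun m : 'X_{1..2} => m ord0) Hex.
have [m0 [m0s m0B m0max]] := argmax (fun m : 'X_{1..2} => m ord_max) Hex.
have H1 : Pn n.+1 (mk d 0 + m1)%MM.
  apply: NNPP => H.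
  have := MI_coef HU H; rewrite mulrDl mcoeffD [X in X@__ + _]mulrC mcoeffMX.
  have -> : ('X_[mk 0 (a d)] * z)@_(mk d 0 + m1) = 0.
    apply: NNPP => /eqP Hnz.
    have : (mk d 0 + m1)%MM \in msupp (z * 'X_[mk 0 (a d)]) by rewrite mcoeff_msupp mulrC.
    rewrite (perm_mem (msuppMX _ _)) => /mapP [m' m's Em'].
    have Hx' : m' ord0 = (d + m1 ord0)%N.
      by have := congr1 (fun m : 'X_{1..2} => m ord0) Em'; rewrite !mnmDE !mkE0 /=; lia.
    have : Pn n m' by apply: NNPP => HP; have := m1max m' m's HP; lia.
    case=> p [q [HQ hp hq]]; apply: H; rewrite Em'; exists p, (a d + q)%N; split.
    - by exists p, q; split => //; constructor 3.
    - by rewrite mnmDE mkE0.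
    - by rewrite mnmDE mkE1; lia.
  by rewrite addr0 => /eqP; rewrite mcoeff_eq0 m1s.
have H0 : Pn n.+1 (mk 0 (a d) + m0)%MM.
  apply: NNPP => H.
  have := MI_coef HU H; rewrite mulrDl mcoeffD [X in _ + X@__]mulrC mcoeffMX.
  have -> : ('X_[mk d 0] * z)@_(mk 0 (a d) + m0) = 0.
    apply: NNPP => /eqP Hnz.
    have : (mk 0 (a d) + m0)%MM \in msupp (z * 'X_[mk d 0]) by rewrite mcoeff_msupp mulrC.
    rewrite (perm_mem (msuppMX _ _)) => /mapP [m' m's Em'].
    have Hy' : m' ord_max = (a d + m0 ord_max)%N.
      by have := congr1 (fun m : 'X_{1..2} => m ord_max) Em'; rewrite !mnmDE !mkE1 /=; lia.
    have : Pn n m' by apply: NNPP => HP; have := m0max m' m's HP; lia.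
    case=> p [q [HQ hp hq]]; apply: H; rewrite Em'; exists (d + p)%N, q; split.
    - by exists p, q; split => //; constructor 1.
    - by rewrite mnmDE mkE0; lia.
    - by rewrite mnmDE mkE1.
  by rewrite add0r => /eqP; rewrite mcoeff_eq0 m0s.
have [p [q [HQ hp hq]]] := H1.
rewrite mnmDE mkE0 in hp; rewrite mnmDE mkE1 in hq.
case: (Qsplit0 d1 a0 ainc HQ) => [[n' [p' [[En] HQ' Ep]]]|Hy1].
  by apply: m1B; exists p', q; split; [rewrite En | lia | lia].
have [p0 [q0 [HQ0 hp0 hq0]]] := H0.
rewrite mnmDE mkE0 in hp0; rewrite mnmDE mkE1 in hq0.
case: (Qsplit2 d1 a0 HQ0) => [[n' [q' [[En] HQ' Eq]]]|Hx0].
  by apply: m0B; exists p0, q'; split; [rewrite En | lia | lia].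
apply: m1B; exists ((d - 1) * n.+1)%N, (a 1 * n.+1)%N; split.
- exact: Qdiag.
- by have := m1max m0 m0s m0B; lia.
- lia.
Qed.

End Main.

Theorem proposition4p2 (k : closedFieldType) (d : nat) (a : nat -> nat) :
  [pchar k] =i pred0 ->
  (1 <= d)%N ->
  a 0%N = 0%N ->
  (forall i, (i < d)%N -> (a i < a i.+1)%N) ->
  (forall i, (2 <= i)%N -> (i < d)%N -> (a i.+1 - a i <= a i - a i.-1)%N) ->
  ideal_eq (ideal_pow (@lexL k d a) 2) (ideal_mul (@J3 k d a) (@lexL k d a)) /\
  gr_depth_pos (@max_xy k) (@lexL k d a).
Proof.
move=> _ d1 a0 ainc bdec; split; first exact: part1 d1 a0 ainc bdec.
pose U : {mpoly k[2]} := 'X_[mk d 0] + 'X_[mk 0 (a d)].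
have HPI : forall n, is_ideal (ideal_pow (@lexL k d a) n).
  by move=> n; apply: ideal_pow_is_ideal; apply: L_ideal.
exists (fun n => if n == 1%N then U else 0); split.
- split.
  + case=> [|[|n]] //=.
      apply: (@MI_pow k d a d1 a0 0); apply: MID; apply: MI_X.
        exists d, 0%N; split; rewrite ?mkE0 ?mkE1 //.
        by exists 0%N => //; rewrite subn0 a0.
      exists 0%N, (a d); split; rewrite ?mkE0 ?mkE1 //.
      by exists d => //; rewrite subnn.
    by case: (HPI n.+2).
  + by exists 2%N; case=> [|[|n]].
- by case: (gen_ideal_is_ideal (fun i : 'I_2 => if val i == 0%N then xv k else yv k)).
- move=> z [Hz _] Hm n; have := Hm n.+1.
  rewrite /gr_mul (bigD1 (Ordinal (n:=n.+2) (m:=1) isT)) //= big1 ?addr0 => [|i Hi].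
    by rewrite subn1 /=; apply: key.
  have Hi' : val i != 1%N.
    by apply: contra Hi => /eqP E; apply/eqP/val_inj.
  by rewrite (negbTE Hi') mul0r.
Qed.
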